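(* Let $\mathcal{C}$ be a connected simply connected Cartan scheme whose real roots form a finite root system, let $a$ be an object, $\Gamma^a$ its Dynkin diagram, and $i\in I$. (1) For $i_1,\dots,i_k\in I$, the induced subdiagram on $\{i,i_1,\dots,i_k\}$ is connected in $\Gamma^a$ if and only if it is connected in $\Gamma^{\rho_i(a)}$. Let $j,k\in I$ with $|\{i,j,k\}|=3$. (2) If $i$ is connected neither to $j$ nor to $k$ (in $\Gamma^a$), then the connection between $j$ and $k$, including labels, is the same in $\Gamma^a$ and $\Gamma^{\rho_i(a)}$, i.e. $c^a_{jk}=c^{\rho_i(a)}_{jk}$ and $c^a_{kj}=c^{\rho_i(a)}_{kj}$. (3) If $i$ is connected to $j$ and not connected to $k$, then $j$ and $k$ are connected in $\Gamma^a$ if and only if they are connected in $\Gamma^{\rho_i(a)}$.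
   Context: Cartan scheme $\mathcal{C}=(I,A,(\rho_i),(C^a))$: $A$ non-empty, involutions $\rho_i:A\to A$, generalized Cartan matrices $C^a=(c^a_{ij})$ ($c_{ii}=2$, $c_{ij}\le 0$ for $i\ne j$, $c_{ij}=0\Leftrightarrow c_{ji}=0$) with $c^a_{ij}=c^{\rho_i(a)}_{ij}$. Weyl groupoid generated by $\sigma_i^a:a\to\rho_i(a)$, $\sigma^a_i(\alpha_j)=\alpha_j-c^a_{ij}\alpha_i$ on $\mathbb{Z}^I$. Connected: all $\mathrm{Hom}(a,b)\neq\emptyset$; simply connected: $\mathrm{Hom}(a,a)=\{\mathrm{id}\}$. Real roots $R^a=\{w(\alpha_j): w\in\mathrm{Hom}(b,a)\}$, $R^a_+=R^a\cap\mathbb{N}_0^I$; finite root system: all $R^a$ finite, $R^a=R^a_+\cup-R^a_+$, $(\rho_i\rho_j)^{m^a_{ij}}(a)=a$ whenever $i\ne j$ and $m^a_{ij}=|R^a\cap(\mathbb{N}_0\alpha_i+\mathbb{N}_0\alpha_j)|<\infty$. The Dynkin diagram $\Gamma^a$ has vertex set $I$; distinct $i,j$ are connected iff $c^a_{ij}\ne0$, by an arrow to $i$ labelled $-c^a_{ij}$. *)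

(* Defs.v *)
From mathcomp Require Import all_boot all_order all_algebra.
Set Implicit Arguments. Unset Strict Implicit. Unset Printing Implicit Defensive.
Import Order.TTheory GRing.Theory Num.Theory.
Local Open Scope ring_scope.

Section CartanScheme.
Variables (I : finType) (A : Type).
Variable rho : I -> A -> A.
Variable C : A -> I -> I -> int.

Definition vec := {ffun I -> int}.

Definition alpha (j : I) : vec := [ffun k => (k == j)%:Z].

Definition cartan_scheme : Prop :=
  [/\ forall i, involutive (rho i),
      forall a i, C a i i = 2,
      forall a i j, i != j -> C a i j <= 0,
      forall a i j, (C a i j == 0) = (C a j i == 0)
    & forall a i j, C a i j = C (rho i a) i j].

(* sigma_i^a : a -> rho_i(a),  sigma_i^a(alpha_j) = alpha_j - c^a_{ij} alpha_i,
   extended Z-linearly *)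
Definition sigma (a : A) (i : I) (v : vec) : vec :=
  [ffun k => v k - (k == i)%:Z * \sum_(j : I) C a i j * v j].

(* A word s = [:: i1; i2; ...; in] starting at object b denotes the morphism
   sigma_{in} ... sigma_{i2}^{rho_{i1} b} sigma_{i1}^b : b -> walk b s.
   Every morphism of the Weyl groupoid is of this form. *)
Fixpoint walk (b : A) (s : seq I) : A :=
  if s is i :: s' then walk (rho i b) s' else b.

Fixpoint act (b : A) (s : seq I) (v : vec) : vec :=
  if s is i :: s' then act (rho i b) s' (sigma b i v) else v.

Definition cs_connected : Prop := forall a b : A, exists s, walk a s = b.

Definition cs_simply_connected : Prop :=
  forall (a : A) (s : seq I), walk a s = a -> forall v, act a s v = v.

Definition real_root (a : A) (v : vec) : Prop :=
  exists b s j, walk b s = a /\ act b s (alpha j) = v.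

Definition nonneg (v : vec) : bool := [forall k, 0 <= v k].

Definition neg_vec (v : vec) : vec := [ffun k => - v k].

Definition in_rank2_cone (i j : I) (v : vec) : bool :=
  nonneg v && [forall k, (k != i) ==> (k != j) ==> (v k == 0)].

Definition finite_root_system : Prop :=
  [/\
      forall a, exists l : seq vec, forall v, real_root a v -> v \in l,
      forall a v, real_root a v -> nonneg v \/ nonneg (neg_vec v)
    & (* (rho_i rho_j)^{m^a_{ij}}(a) = a, where m^a_{ij} is the number of
         elements of R^a \cap (N_0 alpha_i + N_0 alpha_j) (finite by the first
         axiom); l enumerates this set without repetition *)
      forall a i j, i != j ->
        forall l : seq vec, uniq l ->
          (forall v, v \in l <-> real_root a v /\ in_rank2_cone i j v) ->
          iter (size l) (fun b => rho i (rho j b)) a = a].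

Definition dyn_adj (a : A) : rel I := fun i j => (i != j) && (C a i j != 0).

Definition sub_connected (a : A) (S : {set I}) : bool :=
  [forall x in S, forall y in S,
     connect (fun u v => [&& u \in S, v \in S & dyn_adj a u v]) x y].

End CartanScheme.

(* Main.v *)
Require Import Defs.
From mathcomp Require Import all_boot all_order all_algebra.
From mathcomp Require Import zify ring.
Import Order.TTheory GRing.Theory Num.Theory.
Set Implicit Arguments. Unset Strict Implicit. Unset Printing Implicit Defensive.
Local Open Scope ring_scope.

Definition lin3 (I : finType) (p q r : I) (x y z : int) : vec I :=
  [ffun t => (t == p)%:Z * x + (t == q)%:Z * y + (t == r)%:Z * z].

Lemma sum_delta (I : finType) (f : I -> int) (p : I) (x : int) :
  \sum_t f t * ((t == p)%:Z * x) = f p * x.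
Proof.
rewrite (bigD1 p) //= big1 ?addr0; first by rewrite eqxx mul1r.
by move=> t /negbTE ->; rewrite mul0r mulr0.
Qed.

Lemma sum_lin3 (I : finType) (f : I -> int) (p q r : I) (x y z : int) :
  \sum_t f t * lin3 p q r x y z t = f p * x + f q * y + f r * z.
Proof.
under eq_bigr => t _ do rewrite ffunE !mulrDr.
by rewrite !big_split /= !sum_delta.
Qed.

Lemma sigma_lin3 (I : finType) (A : Type) (C : A -> I -> I -> int) a
  (p q r : I) (x y z : int) : p != q -> p != r ->
  sigma C a p (lin3 p q r x y z) =
  lin3 p q r (x - (C a p p * x + C a p q * y + C a p r * z)) y z.
Proof.
move=> pq pr; apply/ffunP => t; rewrite !ffunE sum_lin3.
case: (eqVneq t p) => [->|tp].
  rewrite (negbTE pq) (negbTE pr) /=. ring.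
simpl; ring.
Qed.

Lemma lin3_rot (I : finType) (p q r : I) (x y z : int) :
  lin3 p q r x y z = lin3 r p q z x y.
Proof. apply/ffunP => t; rewrite !ffunE; ring. Qed.

Lemma alpha_lin3 (I : finType) (p q r : I) :
  alpha q = lin3 p q r 0 1 0.
Proof. apply/ffunP => t; rewrite !ffunE; ring. Qed.

Lemma lin3_1 (I : finType) (p q r : I) (x y z : int) : p != q -> p != r ->
  lin3 p q r x y z p = x.
Proof. by move=> pq pr; rewrite ffunE eqxx (negbTE pq) (negbTE pr) /=; ring. Qed.

Lemma lin3_2 (I : finType) (p q r : I) (x y z : int) : p != q -> q != r ->
  lin3 p q r x y z q = y.
Proof. by move=> pq qr; rewrite ffunE eqxx eq_sym (negbTE pq) (negbTE qr) /=; ring. Qed.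

Lemma walk_rcons (I : finType) (A : Type) (rho : I -> A -> A) b s i :
  walk rho b (rcons s i) = rho i (walk rho b s).
Proof. by elim: s b => //= j s IH b. Qed.

Lemma act_rcons (I : finType) (A : Type) (rho : I -> A -> A) C b s i v :
  act rho C b (rcons s i) v = sigma C (walk rho b s) i (act rho C b s v).
Proof. by elim: s b v => //= j s IH b v. Qed.

Lemma root_step (I : finType) (A : Type) (rho : I -> A -> A) C a v i :
  real_root rho C a v -> real_root rho C (rho i a) (sigma C a i v).
Proof.
case=> b [s [j [Hw Ha]]]; exists b, (rcons s i), j.
by rewrite walk_rcons act_rcons Hw Ha.
Qed.

Lemma root_alpha (I : finType) (A : Type) (rho : I -> A -> A) C a j :
  real_root rho C a (alpha j).
Proof. by exists a, [::], j. Qed.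

Lemma mixed (I : finType) (A : Type) (rho : I -> A -> A) C
  (Hpm : forall a v, real_root rho C a v -> nonneg v \/ nonneg (neg_vec v))
  a v p q : real_root rho C a v -> 0 < v p -> v q < 0 -> False.
Proof.
move=> /Hpm [] /forallP H hp hq.
  by have := H q; lia.
by have := H p; rewrite ffunE; lia.
Qed.

Lemma root_string (I : finType) (A : Type) (rho : I -> A -> A) C
  (HC : cartan_scheme rho C) a (j k r : I) : j != k -> j != r ->
  real_root rho C a (lin3 j k r (- C a j k) 1 0).
Proof.
case: HC => Hinv H2 _ _ H5 jk jr.
have := root_step j (root_alpha rho C (rho j a) k).
rewrite Hinv (alpha_lin3 j k r) sigma_lin3 //.
rewrite -(H5 a j k) H2. congr real_root. congr lin3. ring.
Qed.

Lemma bound (I : finType) (A : Type) (rho : I -> A -> A) C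
  (HC : cartan_scheme rho C)
  (Hpm : forall a v, real_root rho C a v -> nonneg v \/ nonneg (neg_vec v))
  a (j k r : I) m : j != k -> j != r -> k != r ->
  real_root rho C a (lin3 j k r m 1 0) -> m <= - C a j k.
Proof.
case: (HC) => Hinv H2 _ _ H5 jk jr kr.
move/(root_step j); rewrite sigma_lin3 // H2 => R.
rewrite leNgt; apply/negP => H.
apply: (mixed Hpm R (p := k) (q := j)).
  by rewrite lin3_2.
rewrite lin3_1 //; lia.
Qed.

Lemma L2 (I : finType) (A : Type) (rho : I -> A -> A) C
  (HC : cartan_scheme rho C)
  (Hpm : forall a v, real_root rho C a v -> nonneg v \/ nonneg (neg_vec v))
  a (i j k : I) : i != j -> i != k -> j != k ->
  C a i j = 0 -> C a i k = 0 -> - C (rho i a) j k <= - C a j k.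
Proof.
case: (HC) => Hinv H2 _ _ H5 ij ik jk Hij Hik.
have ji : j != i by rewrite eq_sym.
have R := root_string HC (rho i a) jk ji.
have := root_step i R.
rewrite Hinv (lin3_rot j k i) sigma_lin3 //.
rewrite -(H5 a i j) -(H5 a i k) Hij Hik.
have -> : 0 - (C (rho i a) i i * 0 + 0 * - C (rho i a) j k + 0 * 1) = 0 by ring.
rewrite -(lin3_rot j k i) => R'.
by apply: (bound HC Hpm _ _ _ R') => //; rewrite eq_sym.
Qed.

Lemma L3 (I : finType) (A : Type) (rho : I -> A -> A) C
  (HC : cartan_scheme rho C)
  (Hpm : forall a v, real_root rho C a v -> nonneg v \/ nonneg (neg_vec v))
  a (i j k : I) : i != j -> i != k -> j != k ->
  C a i j != 0 -> C a i k = 0 -> C a j k = 0 -> C (rho i a) j k = 0.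
Proof.
case: (HC) => Hinv H2 Hle Hsym H5 ij ik jk Hij Hik Hjk.
apply/eqP/negPn/negP => H.
have kj : k != j by rewrite eq_sym.
have ki : k != i by rewrite eq_sym.
have Hkj : C (rho i a) k j != 0 by rewrite Hsym.
have Hkj' := Hle (rho i a) k j kj.
have R := root_string HC (rho i a) kj ki.
have := root_step i R.
rewrite Hinv (lin3_rot k j i) sigma_lin3 //.
set Y := (X in lin3 i k j X _ _).
rewrite -(lin3_rot k j i) => R'.
have := root_step k R'; rewrite sigma_lin3 // H2.
have -> : C a k j = 0 by apply/eqP; rewrite Hsym Hjk.
have -> : C a k i = 0 by apply/eqP; rewrite Hsym Hik.
move=> R2.
apply: (mixed Hpm R2 (p := j) (q := k)).
  by rewrite lin3_2 // eq_sym.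
rewrite lin3_1 // !mul0r; lia.
Qed.

Lemma P2 (I : finType) (A : Type) (rho : I -> A -> A) C
  (HC : cartan_scheme rho C)
  (Hpm : forall a v, real_root rho C a v -> nonneg v \/ nonneg (neg_vec v))
  a (i j k : I) : i != j -> i != k -> j != k ->
  C a i j = 0 -> C a i k = 0 -> C a j k = C (rho i a) j k.
Proof.
move=> ij ik jk Hij Hik.
have h1 := L2 HC Hpm ij ik jk Hij Hik.
case: (HC) => Hinv _ _ _ H5.
have h2 := L2 HC Hpm (a := rho i a) ij ik jk.
rewrite Hinv -!H5 in h2; have := h2 Hij Hik; lia.
Qed.

Lemma P3 (I : finType) (A : Type) (rho : I -> A -> A) C
  (HC : cartan_scheme rho C)
  (Hpm : forall a v, real_root rho C a v -> nonneg v \/ nonneg (neg_vec v))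
  a (i j k : I) : i != j -> i != k -> j != k ->
  dyn_adj C a i j -> ~~ dyn_adj C a i k ->
  (dyn_adj C a j k <-> dyn_adj C (rho i a) j k).
Proof.
move=> ij ik jk; rewrite /dyn_adj ij ik jk /= negbK => Hij /eqP Hik.
case: (HC) => Hinv _ _ _ H5.
split=> H; apply/negP => /eqP H'; move/negP: H; apply; apply/eqP.
  have := L3 HC Hpm (a := rho i a) ij ik jk; rewrite Hinv -!H5; apply => //.
exact: (L3 HC Hpm ij ik jk Hij Hik H').
Qed.

Lemma dyn_sym (I : finType) (A : Type) (rho : I -> A -> A) C
  (HC : cartan_scheme rho C) a (u v : I) :
  dyn_adj C a u v = dyn_adj C a v u.
Proof.
case: HC => _ _ _ Hsym _; by rewrite /dyn_adj eq_sym Hsym.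
Qed.

Lemma dyn_i (I : finType) (A : Type) (rho : I -> A -> A) C
  (HC : cartan_scheme rho C) a (i v : I) :
  dyn_adj C (rho i a) i v = dyn_adj C a i v.
Proof. case: HC => _ _ _ _ H5; by rewrite /dyn_adj -H5. Qed.

Lemma nadj0 (I : finType) (A : Type) C (a : A) (i v : I) :
  i != v -> ~~ dyn_adj C a i v -> C a i v = 0.
Proof. by rewrite /dyn_adj => -> /=; rewrite negbK => /eqP. Qed.

Lemma edge (I : finType) (A : Type) (rho : I -> A -> A) C
  (HC : cartan_scheme rho C)
  (Hpm : forall a v, real_root rho C a v -> nonneg v \/ nonneg (neg_vec v))
  a (i : I) (S : {set I}) u v : i \in S -> u \in S -> v \in S ->
  dyn_adj C a u v ->
  connect (fun x y => [&& x \in S, y \in S & dyn_adj C (rho i a) x y]) u v.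
Proof.
move=> iS uS vS e.
have Ci := dyn_i HC a i.
case: (eqVneq u i) => [Eu|ui].
  by subst u; apply: connect1; rewrite iS vS Ci.
case: (eqVneq v i) => [Ev|vi].
  by subst v; apply: connect1; rewrite iS uS (dyn_sym HC) Ci -(dyn_sym HC).
have uv : u != v by move: e; rewrite /dyn_adj => /andP [].
have iu : i != u by rewrite eq_sym.
have iv : i != v by rewrite eq_sym.
case Hu: (dyn_adj C a i u); case Hv: (dyn_adj C a i v).
- apply: (connect_trans (y := i)); apply: connect1.
    by rewrite uS iS (dyn_sym HC) Ci.
  by rewrite iS vS Ci.
- apply: connect1; rewrite uS vS -(P3 HC Hpm iu iv uv Hu) ?Hv //.
- apply: connect1; rewrite uS vS (dyn_sym HC) -(P3 HC Hpm iv iu _ Hv) ?Hu //.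
    by rewrite (dyn_sym HC).
  by rewrite eq_sym.
- apply: connect1; rewrite uS vS /=.
  move: e; rewrite /dyn_adj (P2 HC Hpm iu iv uv) //; apply: nadj0 => //.
    by rewrite Hu.
  by rewrite Hv.
Qed.

Lemma subc (I : finType) (A : Type) (rho : I -> A -> A) C
  (HC : cartan_scheme rho C)
  (Hpm : forall a v, real_root rho C a v -> nonneg v \/ nonneg (neg_vec v))
  a (i : I) (S : {set I}) : i \in S ->
  sub_connected C a S -> sub_connected C (rho i a) S.
Proof.
move=> iS /forallP H; apply/forallP => x; apply/implyP => xS.
apply/forallP => y; apply/implyP => yS.
move: (H x) => /implyP /(_ xS) /forallP /(_ y) /implyP /(_ yS).
apply: connect_sub => u w /and3P [uS wS e].
exact: edge HC Hpm a i S u w iS uS wS e.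
Qed.

Theorem lemma3p7 (I : finType) (A : Type) (rho : I -> A -> A)
  (C : A -> I -> I -> int)
  (HC : cartan_scheme rho C)
  (Hconn : cs_connected rho)
  (Hsc : cs_simply_connected rho C)
  (Hfin : finite_root_system rho C)
  (a : A) (i : I) :
  (forall l : seq I,
     sub_connected C a [set x | x \in i :: l] <->
     sub_connected C (rho i a) [set x | x \in i :: l]) /\
  (forall j k : I, i != j -> i != k -> j != k ->
     ~~ dyn_adj C a i j -> ~~ dyn_adj C a i k ->
     C a j k = C (rho i a) j k /\ C a k j = C (rho i a) k j) /\
  (forall j k : I, i != j -> i != k -> j != k ->
     dyn_adj C a i j -> ~~ dyn_adj C a i k ->
     (dyn_adj C a j k <-> dyn_adj C (rho i a) j k)).
Proof.
case: Hfin => _ Hpm _.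
split; [|split].
- move=> l; have iS : i \in [set x | x \in i :: l] by rewrite inE mem_head.
  split; first exact: subc.
  move=> H; have := subc HC Hpm (a := rho i a) iS H.
  by case: HC => Hinv _ _ _ _; rewrite Hinv.
- move=> j k ij ik jk Hj Hk.
  have Cj := nadj0 ij Hj; have Ck := nadj0 ik Hk.
  split; first exact: (P2 HC Hpm ij ik jk Cj Ck).
  by apply: (P2 HC Hpm ik ij _ Ck Cj); rewrite eq_sym.
- move=> j k ij ik jk; exact: P3.
Qed.
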